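(* Let $\mathcal S$ be a Stone pseudovariety and $S$ a Stone topological algebra which is residually $\mathcal S$. Then every finite quotient of $S$ belongs to $\mathcal S$; that is, if $\alpha:S\to F$ is an onto continuous homomorphism onto a finite discrete algebra $F$, then $F\in\mathcal S$.
   Context: All algebras are topological $\Omega$-algebras over a fixed topological signature $\Omega=\biguplus_n\Omega_n$ (continuous evaluation maps $\Omega_n\times A^n\to A$). A Stone topological algebra is one whose space is compact Hausdorff and 0-dimensional. A Stone pseudovariety is a nonempty class of Stone topological algebras closed under images by onto continuous homomorphisms that are Stone topological algebras, closed subalgebras, and finite direct products. $S$ is residually $\mathcal S$ if any two distinct elements of $S$ are separated by a continuous homomorphism into a member of $\mathcal S$. *)

(* Defs.v *)
From HB Require Import structures.
From mathcomp Require Import all_boot all_order all_algebra.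
From mathcomp Require Import all_classical all_reals all_analysis.
Set Implicit Arguments. Unset Strict Implicit. Unset Printing Implicit Defensive.
Local Open Scope classical_set_scope.

(** A topological signature: Omega n is the (topological) space of n-ary
    operation symbols; Omega = disjoint union of the Omega n. *)
Definition signature := nat -> topologicalType.

Record talg (Omega : signature) := TAlg {
  carrier :> topologicalType;
  op : forall n, Omega n -> ('I_n -> carrier) -> carrier;
  op_cont : forall n,
    continuous (fun p : (Omega n * {ptws 'I_n -> carrier})%type => op p.1 p.2)
}.
Arguments op {Omega} _ {n}.

Section Defs.
Variable Omega : signature.

Definition is_hom (A B : talg Omega) (f : A -> B) : Prop :=
  forall n (o : Omega n) (xs : 'I_n -> A), f (op A o xs) = op B o (f \o xs).

Definition zero_dim (T : topologicalType) : Prop :=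
  forall (U : set T) (x : T), open U -> U x ->
    exists V : set T, [/\ clopen V, V x & V `<=` U].

Definition stone_talg (A : talg Omega) : Prop :=
  [/\ compact [set: A], hausdorff_space A & zero_dim A].

Definition chom (A B : talg Omega) (f : A -> B) : Prop :=
  continuous f /\ is_hom f.

(** Stone pseudovariety.  Classes of algebras are predicates on [talg Omega];
    (closed) subalgebras and finite direct products are described up to
    isomorphism through the maps realising them. *)
Definition stone_pseudovariety (V : talg Omega -> Prop) : Prop :=
  [/\ exists A, V A,
      (forall A, V A -> stone_talg A),
      (forall (A B : talg Omega) (f : A -> B), V A -> stone_talg B ->
          chom f -> (forall y, exists x, f x = y) -> V B),
      (* closed subalgebras: B embedded in A by an injective continuous hom
         (with B Stone, its image is a closed subalgebra isomorphic to B) *)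
      (forall (A B : talg Omega) (f : B -> A), V A -> stone_talg B ->
          chom f -> injective f -> V B) &
      (* finite direct products: P with projections p_i such that
         x |-> (p_i x)_i is a bijection onto prod_i A_i (P Stone, so this is
         an isomorphism of topological algebras onto the product) *)
      (forall (I : finType) (A : I -> talg Omega) (P : talg Omega)
          (p : forall i, P -> A i),
          (forall i, V (A i)) -> stone_talg P -> (forall i, chom (p i)) ->
          (forall x : (forall i, A i), exists! y : P, forall i, p i y = x i) ->
          V P)].

Definition residually (V : talg Omega -> Prop) (S : talg Omega) : Prop :=
  forall x y : S, x <> y ->
    exists (A : talg Omega) (f : S -> A), [/\ V A, chom f & f x <> f y].

End Defs.

(* Main.v *)
From HB Require Import structures.
From mathcomp Require Import all_boot all_order all_algebra.
From mathcomp Require Import all_classical all_reals all_analysis.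
Require Import Defs.
Set Implicit Arguments. Unset Strict Implicit. Unset Printing Implicit Defensive.
Local Open Scope classical_set_scope.

Lemma zd_hausdorff (T : topologicalType) : zero_dimensional T -> hausdorff_space T.
Proof.
move=> zd; rewrite open_hausdorff => x y /zd [U [[oU cU] Ux nUy]].
exists (U, ~` U); rewrite /= ?inE; first by split.
split => //; first exact: closed_openC.
by rewrite setICr.
Qed.

Lemma zd_lib (T : topologicalType) : hausdorff_space T -> zero_dim T -> zero_dimensional T.
Proof.
move=> hT zd x y xy.
have cy : closed [set y] := @accessible_closed_set1 _ (hausdorff_accessible hT) y.
have [|V [cV Vx VU]] := zd (~` [set y]) x (closed_openC cy).
  by move=> /= exy; move: xy; rewrite exy eqxx.
by exists V; split => // /VU; apply.
Qed.

Lemma lib_zd (T : topologicalType) : compact [set: T] -> hausdorff_space T ->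
  zero_dimensional T -> zero_dim T.
Proof.
move=> cT hT zd U x oU Ux.
have := zero_dimensional_cvg hT zd cT.
move=> /(_ x U (open_nbhs_nbhs (conj oU Ux))) [D [Dx cD] DU].
by exists D.
Qed.

Lemma prod_cont (X : topologicalType) (I : Type) (T : I -> topologicalType)
  (g : X -> prod_topology T) : (forall i, continuous (fun x => g x i)) -> continuous g.
Proof.
move=> cg x; apply/cvg_sup => i.
have : continuous (g : X -> initial_topology (fun f : (forall i, T i) => f i)).
  by apply: continuous_comp_initial; exact: cg.
by move=> /(_ x).
Qed.

Lemma openX' (U V : topologicalType) (P : set U) (Q : set V) :
  open P -> open Q -> open (P `*` Q).
Proof.
move=> oP oQ; rewrite openE => -[a b] /= [Pa Qb].
exists (P, Q) => //; split.
- by move: oP; rewrite openE; exact.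
- by move: oQ; rewrite openE; exact.
Qed.
Lemma fst_cont (X Y : topologicalType) : continuous (@fst X Y).
Proof. by move=> p; exact: cvg_fst. Qed.
Lemma snd_cont (X Y : topologicalType) : continuous (@snd X Y).
Proof. by move=> p; exact: cvg_snd. Qed.

Lemma pair_cont (Z X Y : topologicalType) (f : Z -> X) (g : Z -> Y) :
  continuous f -> continuous g -> continuous (fun z => (f z, g z)).
Proof. by move=> cf cg z; apply: cvg_pair; [exact: cf | exact: cg]. Qed.

Lemma proj_cont (I : Type) (T : I -> topologicalType) (i : I) :
  continuous (fun f : prod_topology T => f i).
Proof.
move=> f; have := @proj_continuous {classic I} T i f.
by [].
Qed.

Definition prodT (Omega : signature) (I : Type) (A : I -> talg Omega) : topologicalType :=
  prod_topology (fun i => (A i : topologicalType)).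

Definition prod_op (Omega : signature) (I : Type) (A : I -> talg Omega) n
  (o : Omega n) (xs : 'I_n -> prodT A) : prodT A :=
  fun i => op (A i) o (fun k => xs k i).

Lemma prod_op_cont (Omega : signature) (I : Type) (A : I -> talg Omega) n :
  continuous (fun p : (Omega n * {ptws 'I_n -> prodT A})%type => prod_op p.1 p.2).
Proof.
apply: prod_cont => i.
pose g1 := fun p : (Omega n * {ptws 'I_n -> prodT A})%type =>
  (p.1, ((fun k => p.2 k i) : {ptws 'I_n -> (A i : topologicalType)})).
have cg1 : continuous g1.
  apply: pair_cont; first exact: fst_cont.
  apply: prod_cont => k.
  move=> p; apply: (@continuous_comp _ _ _ (fun p : (Omega n * {ptws 'I_n -> prodT A})%type => p.2 k) (fun f : prodT A => f i)).
    apply: (@continuous_comp _ _ _ snd (fun f : {ptws 'I_n -> prodT A} => f k)).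
      exact: snd_cont.
    exact: proj_cont.
  exact: proj_cont.
move=> p; apply: (@continuous_comp _ _ _ g1 (fun q : (Omega n * {ptws 'I_n -> (A i : topologicalType)})%type => op (A i) q.1 q.2)).
  exact: cg1.
exact: op_cont.
Qed.

Definition prodA (Omega : signature) (I : Type) (A : I -> talg Omega) : talg Omega :=
  @TAlg Omega (prodT A) (fun n => @prod_op Omega I A n) (fun n => @prod_op_cont Omega I A n).

Lemma prod_stone (Omega : signature) (I : finType) (A : I -> talg Omega) :
  (forall i, stone_talg (A i)) -> stone_talg (prodA A).
Proof.
move=> hA.
have zd : zero_dimensional (prodT A).
  apply: (@zero_dimension_prod I (fun i => (A i : topologicalType))) => i.
  by have [_ h z] := hA i; exact: zd_lib.
have cP : compact [set: prodT A].
  have := @tychonoff I (fun i => (A i : topologicalType)) (fun _ => setT) (fun i => let: And3 c _ _ := hA i in c).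
  congr compact; by apply/seteqP; split.
have hP := zd_hausdorff zd.
by split => //; exact: lib_zd.
Qed.

Lemma prod_V (Omega : signature) (V : talg Omega -> Prop) (hV : stone_pseudovariety V)
  (I : finType) (A : I -> talg Omega) : (forall i, V (A i)) -> V (prodA A).
Proof.
move=> VA; have [_ Vst _ _ Vprod] := hV.
apply: (Vprod I A (prodA A) (fun i (f : prodA A) => f i)) => //.
- by apply: prod_stone => i; exact: Vst.
- move=> i; split; first exact: (@proj_cont I (fun i => (A i : topologicalType)) i).
  by [].
- move=> x; exists x; split => // y hy.
  by apply: functional_extensionality_dep => i; rewrite hy.
Qed.

Definition imT (Omega : signature) (S P : talg Omega) (beta : S -> P) : topologicalType :=
  set_type (range beta).

Lemma im_closed (Omega : signature) (S P : talg Omega) (beta : S -> P)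
  (hb : is_hom beta) n (o : Omega n) (bs : 'I_n -> imT beta) :
  op P o (set_val \o bs) \in range beta.
Proof.
apply/mem_set.
have : forall k, exists x, beta x = set_val (bs k).
  by move=> k; have [x _ h] := set_valP (bs k); exists x.
move=> /choice [xs hxs].
exists (op S o xs) => //; rewrite hb; congr (op P o _).
by apply: funext => k /=; rewrite hxs.
Qed.

Definition im_op (Omega : signature) (S P : talg Omega) (beta : S -> P)
  (hb : is_hom beta) n (o : Omega n) (bs : 'I_n -> imT beta) : imT beta :=
  exist _ (op P o (set_val \o bs)) (im_closed hb o bs).

Lemma val_cont (X : topologicalType) (A : set X) : continuous (@set_val X A : set_type A -> X).
Proof. exact: initial_continuous. Qed.

Lemma im_op_cont (Omega : signature) (S P : talg Omega) (beta : S -> P)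
  (hb : is_hom beta) n :
  continuous (fun p : (Omega n * {ptws 'I_n -> imT beta})%type => im_op hb p.1 p.2).
Proof.
apply: (@continuous_comp_initial _ _ _ (@set_val _ (range beta))).
pose g1 := fun p : (Omega n * {ptws 'I_n -> imT beta})%type =>
  (p.1, ((set_val \o p.2) : {ptws 'I_n -> (P : topologicalType)})).
have cg1 : continuous g1.
  apply: pair_cont; first exact: fst_cont.
  apply: prod_cont => k.
  move=> p; apply: (@continuous_comp _ _ _ (fun p : (Omega n * {ptws 'I_n -> imT beta})%type => p.2 k) set_val).
    apply: (@continuous_comp _ _ _ snd (fun f : {ptws 'I_n -> imT beta} => f k)).
      exact: snd_cont.
    exact: proj_cont.
  exact: val_cont.
move=> p; apply: (@continuous_comp _ _ _ g1 (fun q : (Omega n * {ptws 'I_n -> (P : topologicalType)})%type => op P q.1 q.2)).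
  exact: cg1.
exact: op_cont.
Qed.

Definition imA (Omega : signature) (S P : talg Omega) (beta : S -> P)
  (hb : is_hom beta) : talg Omega :=
  @TAlg Omega (imT beta) (fun n => @im_op Omega S P beta hb n) (fun n => @im_op_cont Omega S P beta hb n).

Definition cor (Omega : signature) (S P : talg Omega) (beta : S -> P)
  (hb : is_hom beta) (x : S) : imA hb :=
  exist _ (beta x) (mem_set (imageT beta x)).

Lemma cor_cont (Omega : signature) (S P : talg Omega) (beta : S -> P)
  (hb : is_hom beta) : continuous beta -> continuous (cor hb).
Proof.
move=> cb; apply: (@continuous_comp_initial _ _ _ (@set_val _ (range beta))).
exact: cb.
Qed.

Lemma cor_surj (Omega : signature) (S P : talg Omega) (beta : S -> P)
  (hb : is_hom beta) (b : imA hb) : exists x, cor hb x = b.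
Proof.
case: b => y hy; have [x _ hx] := set_mem hy.
by exists x; apply: eq_sig_hprop => /=.
Qed.

Lemma im_stone (Omega : signature) (S P : talg Omega) (beta : S -> P)
  (hb : is_hom beta) : continuous beta -> compact [set: S] ->
  zero_dimensional P -> stone_talg (imA hb).
Proof.
move=> cb cS zP.
have zd : zero_dimensional (imT beta).
  move=> x y xy.
  have : set_val x != set_val y.
    by apply: contraNneq xy => h; apply/eqP; apply: eq_sig_hprop.
  move=> /zP [U [cU Ux nUy]].
  exists (set_val @^-1` U); split => //.
  by apply: preimage_clopen => //; exact: val_cont.
have hB := zd_hausdorff zd.
have cB : compact [set: imT beta].
  have -> : [set: imT beta] = cor hb @` setT.
    apply/seteqP; split => b // _; have [x hx] := cor_surj b; by exists x.
  apply: continuous_compact => //; apply: continuous_subspaceT.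
  exact: cor_cont.
by split => //; exact: lib_zd.
Qed.

Lemma im_V (Omega : signature) (V : talg Omega -> Prop) (hV : stone_pseudovariety V)
  (S P : talg Omega) (beta : S -> P) (hb : is_hom beta) :
  V P -> continuous beta -> compact [set: S] -> stone_talg (imA hb).
Proof.
move=> VP cb cS; have [_ Vst _ Vsub _] := hV.
have [_ hP zP] := Vst P VP.
exact: im_stone cb cS (zd_lib hP zP).
Qed.

Lemma im_V' (Omega : signature) (V : talg Omega -> Prop) (hV : stone_pseudovariety V)
  (S P : talg Omega) (beta : S -> P) (hb : is_hom beta) :
  V P -> continuous beta -> compact [set: S] -> V (imA hb).
Proof.
move=> VP cb cS; have [_ Vst _ Vsub _] := hV.
apply: (Vsub P (imA hb) set_val VP (im_V hV hb VP cb cS)).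
  split; first exact: val_cont.
  by [].
by move=> a b h; apply: eq_sig_hprop.
Qed.

Definition gam (Omega : signature) (S P : talg Omega) (beta : S -> P)
  (hb : is_hom beta) (F : talg Omega) (alpha : S -> F) (b : imA hb) : F :=
  alpha (s2val (cid2 (set_valP b))).
Arguments gam {Omega S P beta} hb {F} alpha b.

Lemma gamP (Omega : signature) (S P : talg Omega) (beta : S -> P)
  (hb : is_hom beta) (F : talg Omega) (alpha : S -> F)
  (hk : forall x y, beta x = beta y -> alpha x = alpha y) (b : imA hb) (x : S) :
  beta x = set_val b -> gam hb alpha b = alpha x.
Proof.
rewrite /gam; case: cid2 => y _ hy hx /=.
by apply: hk; rewrite hy hx.
Qed.

Lemma finite_stone (Omega : signature) (F : talg Omega)
  (hfin : finite_set [set: F]) (hdisc : forall U : set F, open U) : stone_talg F.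
Proof.
have zd : zero_dimensional F.
  move=> x y xy; exists [set x]; split => //.
  - split; first exact: hdisc.
    rewrite -[X in closed X]setCK; apply: open_closedC; exact: hdisc.
  - by move=> /= h; move: xy; rewrite h eqxx.
have hF := zd_hausdorff zd.
have cF : compact [set: F] := finite_compact hfin.
by split => //; exact: lib_zd.
Qed.

Lemma quot_V (Omega : signature) (V : talg Omega -> Prop) (hV : stone_pseudovariety V)
  (S P : talg Omega) (beta : S -> P) (hb : is_hom beta) (cb : continuous beta)
  (VP : V P) (cS : compact [set: S])
  (F : talg Omega) (alpha : S -> F)
  (hk : forall x y, beta x = beta y -> alpha x = alpha y)
  (hfin : finite_set [set: F]) (hdisc : forall U : set F, open U)
  (halpha : chom alpha) (hsurj : forall y : F, exists x : S, alpha x = y) :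
  V F.
Proof.
have [_ Vst Vimg _ _] := hV.
have [_ hB _] := im_V hV hb VP cb cS.
apply: (Vimg (imA hb) F (gam hb alpha) (im_V' hV hb VP cb cS) (finite_stone hfin hdisc)).
- split.
  + apply/continuousP => W _.
    pose C := cor hb @` (alpha @^-1` (~` W)).
    have -> : gam hb alpha @^-1` W = ~` C.
      apply/seteqP; split => b.
      * move=> /= Wb [x nWx hx]; apply: nWx.
        by rewrite -(gamP hk (b:=b) (x:=x)) // -hx.
      * move=> /= nC; apply: contrapT => nW; apply: nC.
        have [x0 hx0] := cor_surj b.
        exists x0 => //=; by rewrite -(gamP hk (b:=b) (x:=x0)) // -hx0.
    apply: closed_openC; apply: compact_closed => //.
    apply: continuous_compact.
      apply: continuous_subspaceT; exact: cor_cont.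
    apply: (subclosed_compact _ cS) => //.
    apply: preimage_closed.
      by move=> x _; exact: halpha.1.
    exact: open_closedC.
  + move=> n o bs.
    have : forall k, exists x, beta x = set_val (bs k).
      by move=> k; have [x _ h] := set_valP (bs k); exists x.
    move=> /choice [xs hxs].
    rewrite (gamP hk (b := im_op hb o bs) (x := op S o xs)); last first.
      by rewrite hb /=; congr (op P o _); apply: funext => k /=; rewrite hxs.
    rewrite halpha.2; congr (op F o _); apply: funext => k /=.
    by rewrite (gamP hk (hxs k)).
- move=> y; have [x <-] := hsurj y; exists (cor hb x).
  exact: gamP.
Qed.

Definition pS (T : topologicalType) (x : T) : Type := T.
HB.instance Definition _ (T : topologicalType) (x : T) := Topological.copy (pS x) T.
HB.instance Definition _ (T : topologicalType) (x : T) := isPointed.Build (pS x) x.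

Lemma cover_cpt (T : topologicalType) (x : T) (A : set T) : compact A -> @cover_compact T A.
Proof.
move=> cA; have cA' : @compact (pS x) A := cA.
by rewrite compact_cover in cA'.
Qed.

Lemma empty_case (Omega : signature) (V : talg Omega -> Prop)
  (hV : stone_pseudovariety V) (F : talg Omega) (noF : F -> False) : V F.
Proof.
have [[A0 VA0] Vst _ Vsub _] := hV.
apply: (Vsub A0 F (fun y => False_rect _ (noF y)) VA0).
- split.
  + move=> G PG _; have [y _] := filter_ex (@filterT _ G _); case: (noF y).
  + by move=> y; case: (noF y).
  + by move=> U y; case: (noF y).
- split; first by move=> y; case: (noF y).
  by move=> n o xs; case: (noF (op F o xs)).
- by move=> y; case: (noF y).
Qed.
From mathcomp Require Import finmap.

Unset Implicit Arguments.

Theorem proposition4p10 (Omega : signature) (V : talg Omega -> Prop)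
  (S : talg Omega) (hV : stone_pseudovariety V) (hS : stone_talg S)
  (hres : residually V S)
  (F : talg Omega) (alpha : S -> F)
  (hfin : finite_set [set: F]) (hdisc : forall U : set F, open U)
  (halpha : chom alpha) (hsurj : forall y : F, exists x : S, alpha x = y) :
  V F.
Proof.
have [_ Vst _ _ _] := hV.
have [cS hSh zS] := hS.
case: (pselect (exists x : S, True)) => [[x0 _]|nS]; last first.
  apply: (empty_case hV) => y; have [x _] := hsurj y; apply: nS; by exists x.
pose I0 := {p : (S * S)%type | alpha p.1 != alpha p.2}.
have sel0 : forall i : I0, exists y : ({A : talg Omega & S -> A} * set S)%type,
   [/\ V (projT1 y.1), chom (projT2 y.1), clopen y.2, y.2 (val i).1 &
      ~ y.2 (val i).2 /\ (forall a b, projT2 y.1 a = projT2 y.1 b -> y.2 a -> y.2 b)].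
  move=> [[a b] /= ab].
  have ab' : a <> b by move=> e; move: ab; rewrite e eqxx.
  have [A [h [VA ch hne]]] := hres a b ab'.
  have [_ hA zA] := Vst A VA.
  have [|U [cU Ua nUb]] := zd_lib hA zA (x := h a) (y := h b); first by apply/eqP.
  exists (existT _ A h, h @^-1` U); split => //=.
  - exact: preimage_clopen cU ch.1.
  - by split => // a' b' e; rewrite /= e.
have [sel hsel] := choice sel0.
pose W i := (sel i).2.
pose Dset := [set p : (S * S)%type | alpha p.1 != alpha p.2].
have oE : open [set p : (S * S)%type | alpha p.1 = alpha p.2].
  have -> : [set p : (S * S)%type | alpha p.1 = alpha p.2] =
      \bigcup_(f in [set: F]) ((alpha @^-1` [set f]) `*` (alpha @^-1` [set f])).
    apply/seteqP; split => -[a b] /=.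
    - by move=> e; exists (alpha a) => //; split.
    - by move=> [f _ [/= -> ->]].
  apply: bigcup_open => f _; apply: openX';
    exact: ((continuousP alpha).1 halpha.1 _ (hdisc [set f])).
have cD : compact Dset.
  apply: (@subclosed_compact _ _ ([set: S] `*` [set: S])).
  - have -> : Dset = ~` [set p | alpha p.1 = alpha p.2].
      by apply/seteqP; split => p /=; move=> /eqP.
    exact: open_closedC.
  - exact: compact_setX.
  - by [].
have cov : Dset `<=` cover [set: I0] (fun i => W i `*` ~` W i).
  move=> p Dp; exists (exist _ p Dp) => //.
  by have [_ _ _ h1 [h2 _]] := hsel (exist _ p Dp); split.
have hopen : forall i, [set: I0] i -> open (W i `*` ~` W i).
  move=> i _; have [_ _ [oW cW] _ _] := hsel i; apply: openX' => //.
  exact: closed_openC.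
have [D' _ hD'] := cover_cpt (x0, x0) cD hopen cov.
pose Afam : D' -> talg Omega := fun j => projT1 (sel (fsval j)).1.
pose beta : S -> prodA Afam := fun x j => projT2 (sel (fsval j)).1 x.
have hb : is_hom beta.
  move=> n o xs; apply: functional_extensionality_dep => j /=.
  have [_ ch _ _ _] := hsel (fsval j).
  by rewrite /beta ch.2.
have cb : continuous beta.
  apply: prod_cont => j; have [_ ch _ _ _] := hsel (fsval j); exact: ch.1.
have VP : V (prodA Afam).
  apply: (prod_V hV) => j; by have [v _ _ _ _] := hsel (fsval j).
apply: (quot_V hV hb cb VP cS (alpha := alpha)) => //.
move=> x y e; apply/eqP; apply: contraT => nxy.
have : Dset (x, y) by [].
move=> /hD' [i Di [Wx nWy]].
pose j : D' := FSetSub Di.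
have ej := congr1 (fun f => f j) e.
have [_ _ _ _ [_ hW]] := hsel i.
by case: nWy; exact: hW _ _ ej Wx.
Qed.
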